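(* Let $G$ be a cubic bipartite connected graph and $K$ a constant. Then $G$ admits a TSP-tour of length at most $K$ if and only if $G$ admits a $\tfrac12$-tour of length $K$.
   Context: Continuous graph model: for a connected simple graph $G$, each edge $uv$ is viewed as a unit-length interval whose endpoints are the vertices $u,v$. $P(G)$ is the set of all points $p(u,v,\lambda)$ for $uv\in E(G)$, $\lambda\in[0,1]$, where $p(u,v,\lambda)=p(v,u,1-\lambda)$, $p(u,v,0)=u$, $p(u,v,1)=v$. A walk is a finite sequence of points $(p_0,\dots,p_z)$ in which any two consecutive points are distinct and lie on a common edge $uv$, say $p_{i-1}=p(u,v,\lambda)$, $p_i=p(u,v,\mu)$; this step has length $|\lambda-\mu|$ and covers all points of that edge between them. The length of a walk is the sum of the lengths of its steps; $d(p,q)$ is the minimum length of a walk from $p$ to $q$. A tour is a walk with $p_0=p_z$; the points of the tour are all points covered by its steps. For $\delta\ge 0$, a $\delta$-tour is a tour $T$ such that every $p\in P(G)$ has distance at most $\delta$ from some point of $T$. A TSP-tour of $G$ is a closed walk in $G$ (a tour all of whose points $p_i$ are vertices) visiting every vertex of $G$; its length is the number of edge traversals. *)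

(* Defs.v *)
From mathcomp Require Import all_boot.
From Stdlib Require Import Reals.
Set Implicit Arguments. Unset Strict Implicit. Unset Printing Implicit Defensive.

Section Graph.
Variables (T : finType) (e : rel T).

Definition simple_graph : Prop := symmetric e /\ irreflexive e.
Definition cubic : Prop := forall v : T, #|[pred w | e v w]| = 3.
Definition bipartite : Prop :=
  exists c : T -> bool, forall u v, e u v -> c u != c v.
Definition connected_graph : Prop := forall u v : T, connect e u v.

(** Continuous model: a point p(u,v,lambda) is represented by a triple. *)
Record point := Pt { pu : T; pv : T; pl : R }.

Definition valid_point (p : point) : Prop :=
  e (pu p) (pv p) /\ (0 <= pl p <= 1)%R.

Definition is_vertex (p : point) (x : T) : Prop :=
  (pl p = 0%R /\ pu p = x) \/ (pl p = 1%R /\ pv p = x).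

Definition same_point (p q : point) : Prop :=
  (pu p = pu q /\ pv p = pv q /\ pl p = pl q) \/
  (pu p = pv q /\ pv p = pu q /\ pl p = (1 - pl q)%R) \/
  (exists x, is_vertex p x /\ is_vertex q x).

(** A step from p(u,v,a) to p(u,v,b) along edge uv, with a <> b
    (so the two consecutive points are distinct). *)
Record step := St { su : T; sv : T; sa : R; sb : R }.
Definition valid_step (s : step) : Prop :=
  e (su s) (sv s) /\ (0 <= sa s <= 1)%R /\ (0 <= sb s <= 1)%R /\ sa s <> sb s.
Definition step_start (s : step) : point := Pt (su s) (sv s) (sa s).
Definition step_end (s : step) : point := Pt (su s) (sv s) (sb s).
Definition step_len (s : step) : R := Rabs (sa s - sb s).
Definition step_covers (s : step) (p : point) : Prop :=
  exists t : R, (Rmin (sa s) (sb s) <= t <= Rmax (sa s) (sb s))%R /\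
    same_point p (Pt (su s) (sv s) t).

(** A walk from p to q given by its sequence of steps (the sequence of
    points p_0, ..., p_z is p, the step endpoints, ..., q). *)
Fixpoint is_walk (p q : point) (ws : seq step) : Prop :=
  match ws with
  | [::] => same_point p q
  | s :: ws' => valid_step s /\ same_point p (step_start s) /\ is_walk (step_end s) q ws'
  end.

Definition walk_len (ws : seq step) : R := foldr Rplus 0%R (map step_len ws).

(** d(p,q) <= delta : there is a walk from p to q of length at most delta
    (d is a minimum, so this is equivalent to d(p,q) <= delta). *)
Definition dist_le (p q : point) (delta : R) : Prop :=
  exists ws, is_walk p q ws /\ (walk_len ws <= delta)%R.

Definition is_tour (ws : seq step) : Prop := exists p, valid_point p /\ is_walk p p ws.

Definition tour_covers (ws : seq step) (q : point) : Prop :=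
  exists s, List.In s ws /\ step_covers s q.

Definition delta_tour (delta : R) (ws : seq step) : Prop :=
  is_tour ws /\
  forall p, valid_point p -> exists q, tour_covers ws q /\ dist_le p q delta.

(** TSP-tour: closed walk v0 v1 ... vz = v0 in G visiting all vertices;
    its length is z, the number of edge traversals. *)
Definition TSP_tour (v0 : T) (s : seq T) : Prop :=
  path e v0 s /\ last v0 s = v0 /\ forall x : T, x \in v0 :: s.
Definition TSP_len (s : seq T) : nat := size s.

End Graph.

(* Main.v *)
Require Import Defs.
From mathcomp Require Import all_boot.
From Stdlib Require Import Reals Lra Lia.
Set Implicit Arguments. Unset Strict Implicit.
Local Open Scope R_scope.

Section Basic.
Variable T : finType.
Implicit Types p q m : point T.

Lemma sp_refl p : same_point p p.
Proof. by left. Qed.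

Lemma sp_sym p q : same_point p q -> same_point q p.
Proof.
case: p q => a b l [c d m]; rewrite /same_point /=.
move=> [[-> [-> ->]]|[[-> [-> ->]]|[x [H1 H2]]]].
- by left.
- right; left; repeat split; lra.
- by right; right; exists x.
Qed.

Lemma vertex_uniq p x y : is_vertex p x -> is_vertex p y -> x = y.
Proof.
case: p => a b l; rewrite /is_vertex /=.
move=> [[H1 H2]|[H1 H2]] [[H3 H4]|[H3 H4]]; subst => //; lra.
Qed.


Lemma sp_vertex p q x : same_point p q -> is_vertex p x -> is_vertex q x.
Proof.
case: p q => a b l [c d m]; rewrite /same_point /is_vertex /=.
move=> [[-> [-> ->]]|[[-> [-> ->]]|[y [H1 H2]]]] //.
- move=> [[H ->]|[H ->]]; [right|left]; split => //; lra.
- by move=> H; rewrite -(@vertex_uniq (Pt a b l) y x H1 H).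
Qed.

Lemma sp_trans p m q : same_point p m -> same_point m q -> same_point p q.
Proof.
move=> H1 H2.
have Hv: forall x, is_vertex m x -> same_point p q.
  move=> x Hx; right; right; exists x; split.
  - exact: sp_vertex (sp_sym H1) Hx.
  - exact: sp_vertex H2 Hx.
case: (H1) => [E1|[E1|[x [_ Hx]]]]; last exact: Hv Hx.
all: case: (H2) => [E2|[E2|[x [Hx _]]]]; try exact: Hv Hx.
all: move: E1 E2; case: p m q {H1 H2 Hv} => a b l [c d n] [f g o] /=.
- move=> [-> [-> ->]] [-> [-> ->]]; by left.
- move=> [-> [-> ->]] [-> [-> ->]]; by right; left.
- move=> [-> [-> ->]] [-> [-> ->]]; by right; left.
- move=> [-> [-> ->]] [-> [-> ->]]; left; repeat split => /=; lra.
Qed.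


Definition wsum (w : step T -> R) (ws : seq (step T)) : R :=
  foldr (fun s acc => w s + acc) 0 ws.

Lemma wsum_cat w ws1 ws2 : wsum w (ws1 ++ ws2) = wsum w ws1 + wsum w ws2.
Proof. elim: ws1 => [|s ws IH] /=; rewrite ?IH; lra. Qed.

Lemma walk_len_wsum ws : walk_len ws = wsum (@step_len T) ws.
Proof. by elim: ws => [|s ws IH] //=; rewrite -IH. Qed.

Lemma wsum_le w1 w2 ws : (forall s, List.In s ws -> w1 s <= w2 s) -> wsum w1 ws <= wsum w2 ws.
Proof.
elim: ws => [|s ws IH] /= H; first lra.
have := H s (or_introl erefl); have := IH (fun s' Hs' => H s' (or_intror Hs')); lra.
Qed.

Lemma wsum_ge0 w ws : (forall s, List.In s ws -> 0 <= w s) -> 0 <= wsum w ws.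
Proof.
move=> H; have := @wsum_le (fun _ => 0) w ws H.
suff -> : wsum (fun _ => 0) ws = 0 by [].
by elim: ws {H} => //= s ws ->; lra.
Qed.

Lemma wsum_add w1 w2 ws : wsum (fun s => w1 s + w2 s) ws = wsum w1 ws + wsum w2 ws.
Proof. elim: ws => [|s ws IH] /=; rewrite ?IH; lra. Qed.

Lemma wsum_ext w1 w2 ws : (forall s, List.In s ws -> w1 s = w2 s) -> wsum w1 ws = wsum w2 ws.
Proof.
elim: ws => [|s ws IH] //= H; rewrite (H s (or_introl erefl)) IH //.
by move=> s' Hs'; apply: H; right.
Qed.

Lemma step_len_ge0 (s : step T) : 0 <= step_len s.
Proof. exact: Rabs_pos. Qed.

Section Walk.
Variable e : rel T.

Lemma walk_sp_l p p' q ws : same_point p p' -> is_walk e p' q ws -> is_walk e p q ws.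
Proof.
case: ws => [|s ws] /=; first exact: sp_trans.
by move=> H [V [H1 H2]]; split => //; split => //; apply: sp_trans H H1.
Qed.

Lemma walk_sp_r p q q' ws : is_walk e p q ws -> same_point q q' -> is_walk e p q' ws.
Proof.
elim: ws p => [|s ws IH] p /=; first exact: sp_trans.
by move=> [V [H1 H2]] H; split => //; split => //; apply: IH.
Qed.

Lemma walk_cat p m q ws1 ws2 : is_walk e p m ws1 -> is_walk e m q ws2 -> is_walk e p q (ws1 ++ ws2).
Proof.
elim: ws1 p => [|s ws IH] p /=; first by move=> H1 H2; apply: walk_sp_l H1 H2.
by move=> [V [H1 H2]] H3; split => //; split => //; apply: IH H3.
Qed.

Lemma walk_split p q ws1 ws2 : is_walk e p q (ws1 ++ ws2) -> exists m, is_walk e p m ws1 /\ is_walk e m q ws2.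
Proof.
elim: ws1 p => [|s ws IH] p /=; first by move=> H; exists p; split => //; apply: sp_refl.
move=> [V [H1 H2]]; have [m [Hm1 Hm2]] := IH _ H2; exists m; split => //.
Qed.

Lemma lip (A : point T -> Prop) (f : point T -> R) (w : step T -> R) :
  (forall p q, A p -> A q -> same_point p q -> f p = f q) ->
  forall ws p q p1 q1, is_walk e p q ws -> same_point p p1 -> same_point q q1 -> A p1 -> A q1 ->
  (forall s, List.In s ws -> A (step_start s) /\ A (step_end s) /\
        Rabs (f (step_start s) - f (step_end s)) <= w s) ->
  Rabs (f p1 - f q1) <= wsum w ws.
Proof.
move=> Hinv; elim=> [|s ws IH] p q p1 q1 /=.
  move=> Hpq Hp Hq A1 A2 _; rewrite (Hinv p1 q1) //; last first.
    by apply: sp_trans (sp_sym Hp) (sp_trans Hpq Hq).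
  rewrite Rminus_diag Rabs_R0; lra.
move=> [V [H1 H2]] Hp Hq A1 A2 Hs.
have [As [Ae Hl]] := Hs s (or_introl erefl).
have E : f p1 = f (step_start s).
  by apply: Hinv => //; apply: sp_trans (sp_sym Hp) H1.
have := IH _ _ _ q1 H2 (sp_refl _) Hq Ae A2 (fun s' Hs' => Hs s' (or_intror Hs')).
rewrite E => H.
have := Rabs_triang (f (step_start s) - f (step_end s)) (f (step_end s) - f q1).
have -> : f (step_start s) - f (step_end s) + (f (step_end s) - f q1) = f (step_start s) - f q1 by ring.
lra.
Qed.

End Walk.

Definition Apt (p : point T) := pu p <> pv p.

Lemma inv_gen (f : point T -> R) (g : T -> R) (B : point T -> Prop) :
  (forall a b l, a <> b -> f (Pt a b l) = f (Pt b a (1 - l))) ->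
  (forall p x, Apt p -> B p -> is_vertex p x -> f p = g x) ->
  forall p q, (Apt p /\ B p) -> (Apt q /\ B q) -> same_point p q -> f p = f q.
Proof.
move=> Hrev Hv p q [Ap Bp] [Aq Bq] [E|[E|[x [H1 H2]]]].
- by case: p q E {Ap Bp Aq Bq} => a b l [c d m] /= [-> [-> ->]].
- case: p q E Ap {Bp Aq Bq} => a b l [c d m] /= [-> [-> ->]] Ap.
  by rewrite (Hrev d c (1 - m)) //; congr f; congr Pt; ring.
- by rewrite (Hv p x) // (Hv q x).
Qed.

Definition pos (v : T) (p : point T) : R :=
  if pu p == v then pl p else if pv p == v then 1 - pl p else 1.

Lemma pos_rev v a b l : a <> b -> pos v (Pt a b l) = pos v (Pt b a (1 - l)).
Proof.
rewrite /pos /= => ab.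
case: (a =P v) => av; case: (b =P v) => bv; subst => //; try ring.
all: try (rewrite ?eqxx; case: eqP => // H; subst; ring).
Qed.

Lemma pos_vertex v p x : Apt p -> is_vertex p x -> pos v p = if x == v then 0 else 1.
Proof.
case: p => a b l; rewrite /Apt /is_vertex /pos /= => ab [[-> <-]|[-> <-]].
- case: eqP => // _; case: eqP => // _; ring.
- case: (a =P v) => [av|av]; case: (b =P v) => [bv|bv] //; try ring.
  by subst.
Qed.

Lemma pos_step v (s : step T) :
  Rabs (pos v (step_start s) - pos v (step_end s)) <= step_len s.
Proof.
rewrite /pos /step_len /=; case: eqP => _; first lra.
case: eqP => _.
  have -> : 1 - sa s - (1 - sb s) = - (sa s - sb s) by ring.
  rewrite Rabs_Ropp; lra.
rewrite Rminus_diag Rabs_R0; exact: Rabs_pos.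
Qed.

Lemma Rmin_lip a b c : Rabs (Rmin a c - Rmin b c) <= Rabs (a - b).
Proof. rewrite /Rmin; repeat destruct Rle_dec; split_Rabs; lra. Qed.

Lemma Rabs_lip a b t : Rabs (Rabs (a - t) - Rabs (b - t)) <= Rabs (a - b).
Proof. split_Rabs; lra. Qed.

Definition on_pt (p : point T) (a b : T) : bool :=
  ((pu p == a) && (pv p == b)) || ((pu p == b) && (pv p == a)).

Definition psi (v w : T) (t c : R) (p : point T) : R :=
  if on_pt p v w then Rmin (Rabs (pos v p - t)) c else Rmin (t + pos v p) c.

Lemma psi_inv v w t c : 0 <= t <= c -> c <= 1 - t ->
  forall p q, (Apt p /\ True) -> (Apt q /\ True) -> same_point p q -> psi v w t c p = psi v w t c q.
Proof.
move=> Ht Hc; apply: (@inv_gen (psi v w t c) (fun x => if x == v then t else c) (fun _ => True)).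
- move=> a b l ab; rewrite /psi -pos_rev //.
  by rewrite /on_pt /= orbC (andbC (b == v)) (andbC (b == w)).
- move=> p x Ap _ Hx; rewrite /psi (pos_vertex v Ap Hx).
  case: (x =P v) => _; case: on_pt.
  + rewrite Rminus_0_l Rabs_Ropp Rabs_right ?Rmin_left; lra.
  + rewrite Rmin_left; lra.
  + rewrite Rmin_right // Rabs_right; lra.
  + rewrite Rmin_right; lra.
Qed.

Lemma psi_step v w t c (s : step T) :
  Rabs (psi v w t c (step_start s) - psi v w t c (step_end s)) <= step_len s.
Proof.
have H := pos_step v s.
rewrite /psi /on_pt /=; case: ifP => _.
- apply: Rle_trans (Rmin_lip _ _ _) _; apply: Rle_trans (Rabs_lip _ _ _) H.
- apply: Rle_trans (Rmin_lip _ _ _) _.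
  have -> : t + pos v (step_start s) - (t + pos v (step_end s)) =
            pos v (step_start s) - pos v (step_end s) by ring.
  exact: H.
Qed.

Lemma pos_inv v : forall p q, (Apt p /\ True) -> (Apt q /\ True) -> same_point p q -> pos v p = pos v q.
Proof.
apply: (@inv_gen (pos v) (fun x => if x == v then 0 else 1) (fun _ => True)).
- by move=> a b l ab; rewrite -pos_rev.
- by move=> p x Ap _ Hx; rewrite (pos_vertex v Ap Hx).
Qed.


Definition dep (v w : T) (p : point T) : R :=
  if (pu p == w) && (pv p == v) then pl p
  else if (pu p == v) && (pv p == w) then 1 - pl p else 0.

Lemma dep_vertex0 v w p x : Apt p -> is_vertex p x -> x <> v -> dep v w p = 0.
Proof.
move=> Ap Hx xv.
move: Ap Hx; case: p => a b l; rewrite /Apt /is_vertex /dep /= => ab [[-> ax]|[-> bx]]; subst.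
+ case: (x =P w) => xw; case: (b =P v) => bv; case: (x =P v) => xv' //=; try ring.
+ case: (a =P w) => aw; case: (x =P v) => xv' //=; case: (a =P v) => av; case: (x =P w) => xw //=; ring.
Qed.

Lemma dep_inv v w : v <> w ->
  forall p q, (Apt p /\ ~ is_vertex p v) -> (Apt q /\ ~ is_vertex q v) -> same_point p q ->
  dep v w p = dep v w q.
Proof.
move=> vw.
have Hrev : forall a b l, a <> b -> dep v w (Pt a b l) = dep v w (Pt b a (1 - l)).
  move=> a b l ab; rewrite /dep /=.
  case: (a =P w) => aw; case: (b =P v) => bv; case: (a =P v) => av; case: (b =P w) => bw;
    subst => //=; try ring.
have Hv : forall p x, Apt p -> ~ is_vertex p v -> is_vertex p x -> dep v w p = 0.
  move=> p x Ap nv Hx.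
  have xv : x <> v by move=> E; apply: nv; rewrite -E.
  move: Ap Hx; case: p {nv} => a b l; rewrite /Apt /is_vertex /dep /= => ab [[-> ax]|[-> bx]]; subst.
  + case: (x =P w) => xw; case: (b =P v) => bv; case: (x =P v) => xv' //=; try ring.
  + case: (a =P w) => aw; case: (x =P v) => xv' //=; case: (a =P v) => av; case: (x =P w) => xw //=; ring.
exact: (@inv_gen (dep v w) (fun _ => 0) (fun p => ~ is_vertex p v)).
Qed.

Definition on_st (s : step T) (a b : T) : bool := on_pt (step_start s) a b.

Lemma dep_step v w (s : step T) :
  Rabs (dep v w (step_start s) - dep v w (step_end s)) <= if on_st s v w then step_len s else 0.
Proof.
rewrite /dep /on_st /on_pt /step_len /=.
case: (su s =P w) => aw; case: (sv s =P v) => bv; case: (su s =P v) => av; case: (sv s =P w) => bw;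
  rewrite /= ?Rminus_diag ?Rabs_R0; try lra; try (case: ifP => _; lra).
all: try (have -> : 1 - sa s - (1 - sb s) = - (sa s - sb s) by ring); rewrite ?Rabs_Ropp; try lra.
all: case: ifP => _; rewrite ?Rminus_diag ?Rabs_R0; try lra.
Qed.

End Basic.

Section G.
Variable T : finType.
Variable e : rel T.
Hypothesis Hsym : symmetric e.
Hypothesis Hirr : irreflexive e.

Lemma edge_neq a b : e a b -> a <> b.
Proof. by move=> H E; subst; rewrite Hirr in H. Qed.

Lemma walk_valid (p q : point T) ws s : is_walk e p q ws -> List.In s ws -> valid_step e s.
Proof.
elim: ws p => [|s' ws IH] p //= [V [_ H]] [<-|Hs] //; exact: IH H Hs.
Qed.

Lemma Apt_edge a b l : e a b -> Apt (Pt a b l).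
Proof. by move=> H; apply: edge_neq. Qed.

Lemma valid_Apt p : valid_point e p -> Apt p.
Proof. by case: p => a b l [H _]; apply: Apt_edge. Qed.

Lemma tour_valid ws s : is_tour e ws -> List.In s ws -> valid_step e s.
Proof. by move=> [p [_ H]] Hs; apply: walk_valid H Hs. Qed.

Lemma cover_near ws (f : point T -> R) :
  (forall p q, (Apt p /\ True) -> (Apt q /\ True) -> same_point p q -> f p = f q) ->
  (forall s : step T, Rabs (f (step_start s) - f (step_end s)) <= step_len s) ->
  delta_tour e (1/2) ws -> forall p, valid_point e p ->
  exists s tau, List.In s ws /\ Rmin (sa s) (sb s) <= tau <= Rmax (sa s) (sb s) /\
     Rabs (f p - f (Pt (su s) (sv s) tau)) <= 1/2.
Proof.
move=> Hinv Hl [Ht Hc] p Hp.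
have [q [[s [Hs [tau [Htau Hq]]]] [ws0 [Hw Hlen]]]] := Hc p Hp.
exists s, tau; split => //; split => //.
have [Ve _] := tour_valid Ht Hs.
have := @lip T e (fun p => Apt p /\ True) f (@step_len T) Hinv ws0 p q p (Pt (su s) (sv s) tau)
  Hw (sp_refl _) Hq (conj (valid_Apt Hp) I) (conj (Apt_edge (l:=tau) Ve) I).
rewrite -walk_len_wsum => H; apply: Rle_trans (H _) Hlen.
move=> s' Hs'; have [V' _] := walk_valid Hw Hs'.
by split; [|split] => //; split => //; apply: Apt_edge.
Qed.
End G.

Section G.
Variable T : finType.
Variable e : rel T.
Hypothesis Hsym : symmetric e.
Hypothesis Hirr : irreflexive e.

Lemma step_from (s : step T) y z r : valid_step e s -> e y z -> 0 <= r < 1 ->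
  same_point (Pt y z r) (step_start s) ->
  exists w b, e y w /\ 0 <= b <= 1 /\ b <> r /\ same_point (step_end s) (Pt y w b) /\
    step_len s = Rabs (r - b) /\ (0 < r -> w = z) /\ on_st s y w.
Proof.
case: s => a c s0 s1; rewrite /valid_step /step_len /on_st /on_pt /= => [[Ve [Hs0 [Hs1 Hne]]]] Hyz Hr H.
case: (Rle_lt_or_eq_dec 0 r (proj1 Hr)) => Hr0.
- case: H => [[E1 [E2 E3]]|[[E1 [E2 E3]]|[x [Hx1 Hx2]]]]; try (rewrite /= in E1 E2 E3; subst).
  + exists c, s1; split => //; split; first lra; split; first lra.
    split; first by left.
    split; first by congr Rabs; ring.
    by rewrite !eqxx.
  + exists a, (1 - s1); split; first by rewrite Hsym.
    split; first lra; split; first lra.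
    split; first by right; left; do ! split => //=; ring.
    split; first by rewrite -Rabs_Ropp; congr Rabs; ring.
    by rewrite !eqxx orbT.
  + exfalso; move: Hx1; rewrite /is_vertex /= => [[[H _]|[H _]]]; lra.
- subst r.
  have Hv : is_vertex (Pt y z 0) y by left.
  have := sp_vertex H Hv; rewrite /is_vertex /= => [[[E1 E2]|[E1 E2]]]; subst.
  + exists c, s1; split => //; split; first lra; split; first lra.
    split; first by left.
    split; first by congr Rabs; ring.
    split; first by move=> /Rlt_irrefl.
    by rewrite !eqxx.
  + exists a, (1 - s1); split; first by rewrite Hsym.
    split; first lra; split; first lra.
    split; first by right; left; do ! split => //=; ring.
    split; first by rewrite -Rabs_Ropp; congr Rabs; ring.
    split; first by move=> /Rlt_irrefl.
    by rewrite !eqxx orbT.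
Qed.


Definition wt (vis : T -> bool) y z r : R := if vis y && vis z then r else 0.
Definition wP (vis : T -> bool) (s : step T) : R :=
  if vis (su s) && vis (sv s) then step_len s else 0.

Lemma on_st_vis (vis : T -> bool) (s : step T) y w : on_st s y w ->
  (vis (su s) && vis (sv s) = vis y && vis w) /\ (vis (su s) || vis (sv s) = vis y || vis w).
Proof.
rewrite /on_st /on_pt /= => /orP [/andP [/eqP -> /eqP ->]|/andP [/eqP -> /eqP ->]] //.
by rewrite andbC orbC.
Qed.

Lemma vertex_Pt (a b x : T) l : 0 <= l < 1 -> is_vertex (Pt a b l) x -> l = 0 /\ x = a.
Proof. rewrite /is_vertex /= => H [[H1 H2]|[H1 H2]]; [by []|lra]. Qed.

Lemma extract (vis : T -> bool) : forall ws p q y z r,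
  is_walk e p q ws -> same_point p (Pt y z r) -> e y z -> 0 <= r < 1 -> vis y ->
  (forall s x, List.In s ws -> is_vertex (step_start s) x \/ is_vertex (step_end s) x -> vis x) ->
  exists sl y' z' r', path e y sl /\ last y sl = y' /\ same_point q (Pt y' z' r') /\
   e y' z' /\ 0 <= r' < 1 /\
   (forall s x, List.In s ws -> is_vertex (step_start s) x \/ is_vertex (step_end s) x ->
        x \in y :: sl) /\
   (forall s, List.In s ws -> vis (su s) || vis (sv s)) /\
   INR (size sl) + wt vis y' z' r' <= wsum (wP vis) ws + wt vis y z r.
Proof.
elim=> [|s ws IH] p q y z r.
  move=> /= Hpq Hp Hyz Hr Hy _; exists [::], y, z, r.
  split => //; split => //; split; first exact: sp_trans (sp_sym Hpq) Hp.
  split => //; split => //; split => //; split => //.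
  rewrite /=; lra.
move=> /= [V [H1 H2]] Hp Hyz Hr Hy Hvis.
have Hst : same_point (Pt y z r) (step_start s) := sp_trans (sp_sym Hp) H1.
have [w [b [Hyw [Hb [Hbr [Hend [Hlen [Hwz Hon]]]]]]]] := step_from V Hyz Hr Hst.
have [Eand Eor] := on_st_vis vis Hon.
have HvS : forall x, is_vertex (step_start s) x -> x = y.
  by move=> x Hx; have [_ ->] := vertex_Pt Hr (sp_vertex (sp_sym Hst) Hx).
have HvE : forall x, is_vertex (step_end s) x -> (b = 0 /\ x = y) \/ (b = 1 /\ x = w).
  move=> x Hx; move: (sp_vertex Hend Hx); rewrite /is_vertex /= => [[[-> <-]|[-> <-]]].
  - by left.
  - by right.
have HwP : wP vis s = if vis y && vis w then Rabs (r - b) else 0 by rewrite /wP Eand Hlen.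
have wt0 : forall a c l, 0 <= l -> 0 <= wt vis a c l by move=> a c l Hl; rewrite /wt; case: ifP => _; lra.
have Hvis' : forall s' x, List.In s' ws -> is_vertex (step_start s') x \/ is_vertex (step_end s') x -> vis x.
  by move=> s' x Hs' Hx; apply: (Hvis s' x) => //; right.
have Hrest : forall sl, (forall s' x, List.In s' ws -> is_vertex (step_start s') x \/ is_vertex (step_end s') x -> x \in y :: sl) ->
   (forall s', List.In s' ws -> vis (su s') || vis (sv s')) ->
   (forall x, is_vertex (step_end s) x -> x \in y :: sl) ->
   (forall s' x, List.In s' (s :: ws) -> is_vertex (step_start s') x \/ is_vertex (step_end s') x -> x \in y :: sl) /\
   (forall s', List.In s' (s :: ws) -> vis (su s') || vis (sv s')).
  move=> sl C1 C2 C3; split.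
  - move=> s' x [<-|Hs'] Hx; last exact: C1 Hs' Hx.
    case: Hx => [Hx|Hx]; last exact: C3.
    by rewrite (HvS x Hx) mem_head.
  - by move=> s' [<-|Hs']; [rewrite Eor Hy | apply: C2].
case: (Req_EM_T b 1) => Hb1.
- subst b.
  have Hvw : vis w.
    apply: (Hvis s w (or_introl erefl)); right.
    by apply: sp_vertex (sp_sym Hend) _; right.
  have Hend' : same_point (step_end s) (Pt w y 0).
    right; right; exists w; split; last by left.
    by apply: sp_vertex (sp_sym Hend) _; right.
  have [sl [y' [z' [r' [P1 [P2 [P3 [P4 [P5 [P6 [P7 P8]]]]]]]]]]] :=
    IH _ q w y 0 H2 Hend' (ltac:(by rewrite Hsym)) (conj (Rle_refl 0) Rlt_0_1) Hvw Hvis'.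
  exists (w :: sl), y', z', r'.
  have [C1 C2] := Hrest (w :: sl) (fun s' x Hs' Hx => ltac:(by rewrite in_cons (P6 s' x Hs' Hx) orbT)) P7
    (fun x Hx => ltac:(case: (HvE x Hx) => [[H0 _]|[_ ->]]; [lra | by rewrite in_cons mem_head orbT])).
  do ! split => //=; try by rewrite Hyw.
  change (INR (size sl).+1 + wt vis y' z' r' <= wP vis s + wsum (wP vis) ws + wt vis y z r).
  move: P8; rewrite S_INR HwP Hy Hvw /wt /=.
  have -> : Rabs (r - 1) = 1 - r by rewrite Rabs_left1; lra.
  have Hwt : (if vis y && vis z then r else 0) = r.
    case: (Rle_lt_or_eq_dec 0 r (proj1 Hr)) => Hr0; last by subst; case: ifP.
    by rewrite -(Hwz Hr0) Hy Hvw.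
  rewrite Hwt if_same; case: ifP => _ H; lra.
- case: (Req_EM_T b 0) => Hb0.
  + subst b.
    have [sl [y' [z' [r' [P1 [P2 [P3 [P4 [P5 [P6 [P7 P8]]]]]]]]]]] :=
      IH _ q y w 0 H2 Hend Hyw (conj (Rle_refl 0) Rlt_0_1) Hy Hvis'.
    exists sl, y', z', r'.
    have [C1 C2] := Hrest sl P6 P7
      (fun x Hx => ltac:(case: (HvE x Hx) => [[_ ->]|[H0 _]]; [exact: mem_head | lra])).
    do ! split => //.
    have := wt0 y z r (proj1 Hr); have : 0 <= wP vis s by rewrite HwP; case: ifP => _; [exact: Rabs_pos | lra].
    move: P8; move: (wt vis y' z' r') => W'; rewrite /= /wt if_same; lra.
  + have Hb' : 0 <= b < 1 by lra.
    have [sl [y' [z' [r' [P1 [P2 [P3 [P4 [P5 [P6 [P7 P8]]]]]]]]]]] :=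
      IH _ q y w b H2 Hend Hyw Hb' Hy Hvis'.
    exists sl, y', z', r'.
    have [C1 C2] := Hrest sl P6 P7
      (fun x Hx => ltac:(case: (HvE x Hx) => [[H0 _]|[H0 _]]; lra)).
    do ! split => //.
    move: P8; move: (wt vis y' z' r') => W'; rewrite /= HwP /wt.
    case: (Rle_lt_or_eq_dec 0 r (proj1 Hr)) => Hr0.
    * rewrite -(Hwz Hr0); case: ifP => _ H; last lra.
      have : b <= Rabs (r - b) + r by split_Rabs; lra.
      lra.
    * subst r; rewrite if_same; case: ifP => _ H; last lra.
      have : b <= Rabs (0 - b) by split_Rabs; lra.
      lra.
Qed.


End G.

Section Gen.
Variable T : finType.

Definition Dmax (g : step T -> R) (l : seq (step T)) : R :=
  foldr (fun s acc => Rmax (g s) acc) 0 l.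

Lemma Dmax_ub g l s : List.In s l -> g s <= Dmax g l.
Proof.
elim: l => [|s' l IH] //= [<-|H]; first exact: Rmax_l.
apply: Rle_trans (IH H) (Rmax_r _ _).
Qed.

Lemma Dmax_ge0 g l : 0 <= Dmax g l.
Proof. elim: l => [|s l IH] /=; [lra | apply: Rle_trans IH (Rmax_r _ _)]. Qed.

Lemma Dmax_att g l : Dmax g l = 0 \/ exists s, List.In s l /\ Dmax g l = g s.
Proof.
elim: l => [|s l IH] /=; first by left.
rewrite /Rmax; case: Rle_dec => _.
- by case: IH => [->|[s' [H1 H2]]]; [left | right; exists s'; split => //; right].
- by right; exists s; split => //; left.
Qed.

Lemma in_split_cat (s : step T) l : List.In s l -> exists l1 l2, l = l1 ++ s :: l2.
Proof.
elim: l => [|s' l IH] //= [<-|H]; first by exists [::], l.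
by have [l1 [l2 ->]] := IH H; exists (s' :: l1), l2.
Qed.

Lemma In_cat (s : step T) l1 l2 : List.In s (l1 ++ l2) <-> List.In s l1 \/ List.In s l2.
Proof.
elim: l1 => [|s' l IH] /=; first by split => [H|[[]|H]] //; right.
by rewrite IH; tauto.
Qed.

End Gen.

Section U.
Variable T : finType.
Variable e : rel T.
Hypothesis Hsym : symmetric e.
Hypothesis Hirr : irreflexive e.
Variable ws : seq (step T).
Variable X : point T.
Variable x0 : T.
Hypothesis Hd : delta_tour e (1/2) ws.
Hypothesis Hw : is_walk e X X ws.
Hypothesis HX : is_vertex X x0.
Hypothesis HXA : Apt X.
Variable vis : T -> bool.
Hypothesis visP : forall y, vis y <->
  exists s, List.In s ws /\ (is_vertex (step_start s) y \/ is_vertex (step_end s) y).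
Hypothesis Hvs : forall s, List.In s ws -> vis (su s) || vis (sv s).
Variable v : T.
Hypothesis Hv : ~~ vis v.

Lemma sval s : List.In s ws -> valid_step e s.
Proof. exact: walk_valid Hw. Qed.

Lemma notv s : List.In s ws -> ~ is_vertex (step_start s) v /\ ~ is_vertex (step_end s) v.
Proof.
move=> Hs; split => H; move/negP: Hv; apply; apply/visP; exists s; split => //; tauto.
Qed.

Lemma dep_range w p : 0 <= pl p <= 1 -> ~ is_vertex p v -> 0 <= dep v w p < 1.
Proof.
case: p => a b l; rewrite /dep /is_vertex /= => Hl Hnv.
case: ifP => [/andP [_ /eqP bv]|_].
  split; first lra.
  case: (Req_EM_T l 1) => E; last lra.
  by case: Hnv; right.
case: ifP => [/andP [/eqP av _]|_]; last lra.
case: (Req_EM_T l 0) => E; first by case: Hnv; left.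
lra.
Qed.

Definition Dm w := Dmax (fun s => Rmax (dep v w (step_start s)) (dep v w (step_end s))) ws.

Lemma Dm_ub w s : List.In s ws -> dep v w (step_start s) <= Dm w /\ dep v w (step_end s) <= Dm w.
Proof.
move=> Hs; have := Dmax_ub (fun s => Rmax (dep v w (step_start s)) (dep v w (step_end s))) Hs.
rewrite -/(Dm w) => H; split; [apply: Rle_trans (Rmax_l _ _) H | apply: Rle_trans (Rmax_r _ _) H].
Qed.

Lemma Dm_ge0 w : 0 <= Dm w.
Proof. exact: Dmax_ge0. Qed.

Lemma Dm_att w : Dm w = 0 \/ exists s, List.In s ws /\
   (Dm w = dep v w (step_start s) \/ Dm w = dep v w (step_end s)).
Proof.
case: (Dmax_att (fun s => Rmax (dep v w (step_start s)) (dep v w (step_end s))) ws) => [H|[s [Hs H]]].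
  by left.
right; exists s; split => //; rewrite /Dm H /Rmax; case: Rle_dec => _; tauto.
Qed.

Lemma Dm_lt1 w : Dm w < 1.
Proof.
case: (Dm_att w) => [->|[s [Hs [->| ->]]]]; first lra.
all: have [_ [Hs0 [Hs1 _]]] := sval Hs; have [N1 N2] := notv Hs.
- exact: (proj2 (@dep_range w (step_start s) Hs0 N1)).
- exact: (proj2 (@dep_range w (step_end s) Hs1 N2)).
Qed.

Lemma two_D w : v <> w ->
  2 * Dm w <= wsum (fun s => if on_st s v w then step_len s else 0) ws.
Proof.
move=> vw.
have Hge : 0 <= wsum (fun s => if on_st s v w then step_len s else 0) ws.
  by apply: wsum_ge0 => s _; case: ifP => _; [exact: step_len_ge0 | lra].
case: (Dm_att w) => [->|[s [Hs HD]]]; first lra.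
have [pre [post Ews]] := in_split_cat Hs.
have Hx0 : x0 <> v.
  move=> E; move/negP: Hv; apply; apply/visP.
  move: Hw Hs; rewrite Ews; case: pre {Ews} => [|s1 pre] /= [_ [H1 _]] _.
  - by exists s; split; [left | left; apply: sp_vertex H1 _; rewrite -E].
  - by exists s1; split; [left | left; apply: sp_vertex H1 _; rewrite -E].
have AX : Apt X /\ ~ is_vertex X v by split => // H; apply: Hx0; apply: vertex_uniq HX H.
have dX : dep v w X = 0 by apply: dep_vertex0 HXA HX Hx0.
have Hstep : forall s', List.In s' ws ->
   (Apt (step_start s') /\ ~ is_vertex (step_start s') v) /\
   (Apt (step_end s') /\ ~ is_vertex (step_end s') v) /\
   Rabs (dep v w (step_start s') - dep v w (step_end s')) <=
     (fun s => if on_st s v w then step_len s else 0) s'.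
  move=> s' Hs'; have [Ve _] := sval Hs'; have [N1 N2] := notv Hs'.
  split; [split => //; exact: Apt_edge Ve|].
  split; [split => //; exact: Apt_edge Ve|].
  exact: dep_step.
have Hinv := dep_inv vw.
have Sub : forall l1 l2, ws = l1 ++ l2 -> forall s', List.In s' l1 \/ List.In s' l2 -> List.In s' ws.
  by move=> l1 l2 -> s' H; apply/In_cat.
case: HD => HD.
- move: Hw; rewrite Ews => Hw'.
  have [m [Hm1 Hm2]] := walk_split Hw'.
  have [Ae Be] := Hstep s Hs.
  have Hm2' : same_point m (step_start s) by case: Hm2 => _ [H _].
  have L1 := lip Hinv Hm1 (sp_refl X) Hm2' AX Ae
    (fun s' Hs' => Hstep s' (Sub _ _ Ews s' (or_introl Hs'))).
  have L2 := lip Hinv Hm2 Hm2' (sp_refl X) Ae AX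
    (fun s' Hs' => Hstep s' (Sub _ _ Ews s' (or_intror Hs'))).
  rewrite wsum_cat; rewrite dX -HD in L1 L2.
  move: L1 L2; split_Rabs; lra.
- have Ews' : ws = (pre ++ [:: s]) ++ post by rewrite Ews -catA.
  move: Hw; rewrite Ews' => Hw'.
  have [m [Hm1 Hm2]] := walk_split Hw'.
  have [m' [_ Hm3]] := walk_split Hm1.
  have [Ae [Be _]] := Hstep s Hs.
  have Hm3' : same_point m (step_end s).
    by case: Hm3 => _ [_ H]; apply: sp_sym.
  have L1 := lip Hinv Hm1 (sp_refl X) Hm3' AX Be
    (fun s' Hs' => Hstep s' (Sub _ _ Ews' s' (or_introl Hs'))).
  have L2 := lip Hinv Hm2 Hm3' (sp_refl X) Be AX
    (fun s' Hs' => Hstep s' (Sub _ _ Ews' s' (or_intror Hs'))).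
  rewrite wsum_cat; rewrite dX -HD in L1 L2.
  move: L1 L2; split_Rabs; lra.
Qed.


Lemma cov_dep w (s : step T) tau : v <> w -> List.In s ws ->
  Rmin (sa s) (sb s) <= tau <= Rmax (sa s) (sb s) ->
  on_pt (Pt (su s) (sv s) tau) v w -> 1 - Dm w <= pos v (Pt (su s) (sv s) tau).
Proof.
move=> vw Hs Ht; have [D1 D2] := Dm_ub w Hs.
move: D1 D2 Ht; case: s {Hs} => a b s0 s1; rewrite /on_pt /dep /pos /=.
have wv : (w == v) = false by apply/eqP => E; apply: vw.
have vw' : (v == w) = false by apply/eqP.
move=> D1 D2 Ht.
case/orP => [/andP [/eqP E1 /eqP E2]|/andP [/eqP E1 /eqP E2]]; subst a b;
  rewrite !eqxx ?wv ?vw' /= in D1 D2 *.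
- move: Ht; rewrite /Rmin /Rmax; repeat destruct Rle_dec; lra.
- move: Ht; rewrite /Rmin /Rmax; repeat destruct Rle_dec; lra.
Qed.

Variables w1 w2 w3 : T.
Hypothesis He1 : e v w1.
Hypothesis He2 : e v w2.
Hypothesis He3 : e v w3.
Hypothesis H12 : w1 <> w2.
Hypothesis H13 : w1 <> w3.
Hypothesis H23 : w2 <> w3.
Hypothesis Hnb : forall u, e v u -> u = w1 \/ u = w2 \/ u = w3.

Definition mm := Rmin (1 - Dm w1) (Rmin (1 - Dm w2) (1 - Dm w3)).

Lemma mm_le w : e v w -> mm <= 1 - Dm w.
Proof.
move=> /Hnb [->|[->|->]]; rewrite /mm /Rmin; repeat destruct Rle_dec; lra.
Qed.

Lemma mm_pos : 0 < mm.
Proof.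
have := Dm_lt1 w1; have := Dm_lt1 w2; have := Dm_lt1 w3.
rewrite /mm /Rmin; repeat destruct Rle_dec; lra.
Qed.

Lemma mm_le1 : mm <= 1.
Proof.
have := Dm_ge0 w1; rewrite /mm /Rmin; repeat destruct Rle_dec; lra.
Qed.

Lemma vne w : e v w -> v <> w.
Proof. by move=> H E; subst; rewrite Hirr in H. Qed.

Lemma cov_m (s : step T) tau : List.In s ws ->
  Rmin (sa s) (sb s) <= tau <= Rmax (sa s) (sb s) -> mm <= pos v (Pt (su s) (sv s) tau).
Proof.
move=> Hs Ht; have [Ve _] := sval Hs.
case: (su s =P v) => av.
  have Hwn : e v (sv s) by rewrite -av.
  apply: Rle_trans (mm_le Hwn) _; apply: cov_dep (vne Hwn) Hs Ht _.
  by rewrite /on_pt /= av !eqxx.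
case: (sv s =P v) => bv.
  have Hwn : e v (su s) by rewrite Hsym -bv.
  apply: Rle_trans (mm_le Hwn) _; apply: cov_dep (vne Hwn) Hs Ht _.
  by rewrite /on_pt /= bv !eqxx orbT.
rewrite /pos /=; move/eqP/negbTE: av => ->; move/eqP/negbTE: bv => ->; exact: mm_le1.
Qed.

Lemma mm_half : mm <= 1/2.
Proof.
have Hp : valid_point e (Pt v w1 0) by split => //=; lra.
have [s [tau [Hs [Ht H]]]] := cover_near Hirr (@pos_inv T v) (@pos_step T v) Hd Hp.
have := cov_m Hs Ht; have := mm_pos; move: H; rewrite {1}/pos /= eqxx.
split_Rabs; lra.
Qed.

Lemma D_ge w : e v w -> mm <= Dm w.
Proof.
move=> Hwn; have vw := vne Hwn.
case: (Rle_dec mm (Dm w)) => // /Rnot_le_lt Hc; exfalso.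
have [d Ed] : exists d, d = 1 - Dm w by eexists.
have Hmd := mm_le Hwn; have Hm0 := mm_pos; have Hd1 := Dm_ge0 w.
have [t Et] : exists t, t = (d - mm) / 2 by eexists.
have [c [Ec1 [Ec2 Ec3]]] : exists c, c <= 1 - t /\ c <= (d + mm) / 2 /\ (c = 1 - t \/ c = (d + mm) / 2).
  exists (Rmin (1 - t) ((d + mm) / 2)); rewrite /Rmin; destruct Rle_dec; lra.
have Hc1 : c > 1/2 by lra.
have Htc : 0 <= t <= c by lra.
have Hct : c <= 1 - t by lra.
have Hp : valid_point e (Pt v w t) by split => //=; lra.
have [s [tau [Hs [Ht H]]]] := cover_near Hirr (psi_inv v w Htc Hct) (@psi_step T v w t c) Hd Hp.
have H0 : psi v w t c (Pt v w t) = 0.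
  rewrite /psi /on_pt /pos /= !eqxx /= Rminus_diag Rabs_R0 Rmin_left; lra.
have Hr : c <= psi v w t c (Pt (su s) (sv s) tau).
  rewrite /psi; case: ifP => Hon.
  - have := cov_dep vw Hs Ht Hon; rewrite -Ed => Hpos.
    rewrite Rmin_right; first lra.
    have : d - t <= Rabs (pos v (Pt (su s) (sv s) tau) - t) by split_Rabs; lra.
    lra.
  - have Hpos := cov_m Hs Ht.
    rewrite Rmin_right; lra.
move: H; rewrite H0; split_Rabs; lra.
Qed.

Lemma sum3 a b c m : 0 <= m -> m = Rmin a (Rmin b c) -> m <= 1 - a -> m <= 1 - b -> m <= 1 - c ->
  1 <= (1 - a) + (1 - b) + (1 - c).
Proof. move=> H0 E; rewrite E in H0 *; rewrite /Rmin in H0 *; repeat destruct Rle_dec; lra. Qed.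

Lemma Dsum : 1 <= Dm w1 + Dm w2 + Dm w3.
Proof.
move: (D_ge He1) (D_ge He2) (D_ge He3) => A1 A2 A3.
have := sum3 (Rlt_le _ _ mm_pos) (erefl mm) ltac:(lra) ltac:(lra) ltac:(lra).
lra.
Qed.


Lemma inc_split (s : step T) : valid_step e s ->
  (if (su s == v) || (sv s == v) then step_len s else 0) =
  (if on_st s v w1 then step_len s else 0) + (if on_st s v w2 then step_len s else 0) +
  (if on_st s v w3 then step_len s else 0).
Proof.
have n1 : (v == w1) = false by apply/eqP; apply: vne.
have n2 : (v == w2) = false by apply/eqP; apply: vne.
have n3 : (v == w3) = false by apply/eqP; apply: vne.
have m1 : (w1 == v) = false by rewrite eq_sym.
have m2 : (w2 == v) = false by rewrite eq_sym.
have m3 : (w3 == v) = false by rewrite eq_sym.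
have k12 : (w1 == w2) = false by apply/eqP.
have k13 : (w1 == w3) = false by apply/eqP.
have k23 : (w2 == w3) = false by apply/eqP.
have k21 : (w2 == w1) = false by rewrite eq_sym.
have k31 : (w3 == w1) = false by rewrite eq_sym.
have k32 : (w3 == w2) = false by rewrite eq_sym.
case: s => a b s0 s1 [Ve _]; rewrite /on_st /on_pt /=.
case: (a =P v) => av.
  subst a; have [E|[E|E]] := Hnb Ve; rewrite /= in E; subst b;
    rewrite !eqxx ?n1 ?n2 ?n3 ?m1 ?m2 ?m3 ?k12 ?k13 ?k23 ?k21 ?k31 ?k32 /=; ring.
case: (b =P v) => bv.
  subst b; have Ve' : e v a by rewrite Hsym.
  have [E|[E|E]] := Hnb Ve'; rewrite /= in E; subst a;
    rewrite !eqxx ?n1 ?n2 ?n3 ?m1 ?m2 ?m3 ?k12 ?k13 ?k23 ?k21 ?k31 ?k32 /=; ring.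
move/eqP/negbTE: av => av; move/eqP/negbTE: bv => bv.
rewrite ?av ?bv /= ?andbF ?if_same; try ring.
Qed.

Lemma dep_nz w (p : point T) : dep v w p <> 0 ->
  (pu p = w /\ pv p = v) \/ (pu p = v /\ pv p = w).
Proof.
rewrite /dep; case: ifP => [/andP [/eqP -> /eqP ->] _|_]; first by left.
case: ifP => [/andP [/eqP -> /eqP ->] _|_]; first by right.
by [].
Qed.

Lemma vert_bound : 2 <= wsum (fun s => if (su s == v) || (sv s == v) then step_len s else 0) ws /\
  exists u, e v u /\ vis u.
Proof.
split.
  rewrite (@wsum_ext _ _ (fun s => (if on_st s v w1 then step_len s else 0) +
     (if on_st s v w2 then step_len s else 0) + (if on_st s v w3 then step_len s else 0))); last first.
    by move=> s Hs; apply: inc_split; apply: sval.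
  rewrite !wsum_add.
  have := two_D (vne He1); have := two_D (vne He2); have := two_D (vne He3); have := Dsum.
  lra.
have [w [Hwe HD]] : exists w, e v w /\ 0 < Dm w.
  have := Dsum; have := Dm_ge0 w1; have := Dm_ge0 w2; have := Dm_ge0 w3.
  case: (Rlt_dec 0 (Dm w1)) => H1; first by exists w1.
  case: (Rlt_dec 0 (Dm w2)) => H2; first by exists w2.
  case: (Rlt_dec 0 (Dm w3)) => H3; first by exists w3.
  lra.
exists w; split => //.
have [E|[s [Hs Es]]] := Dm_att w; first lra.
have Hnz : (su s = w /\ sv s = v) \/ (su s = v /\ sv s = w).
  case: Es => Es; [apply: (@dep_nz w (step_start s)) | apply: (@dep_nz w (step_end s))]; lra.
have := Hvs Hs; move/negbTE: Hv => Hv'.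
by case: Hnz => [[-> ->]|[-> ->]]; rewrite Hv' ?orbF.
Qed.

End U.

Section H.
Variable T : finType.
Variable e : rel T.
Hypothesis Hsym : symmetric e.
Hypothesis Hirr : irreflexive e.
Hypothesis Hcub : cubic e.

Lemma nbrs v : exists w1 w2 w3, e v w1 /\ e v w2 /\ e v w3 /\ w1 <> w2 /\ w1 <> w3 /\
   w2 <> w3 /\ forall u, e v u -> u = w1 \/ u = w2 \/ u = w3.
Proof.
have := Hcub v; rewrite cardE.
have := enum_uniq [pred w | e v w]; have Hm := mem_enum [pred w | e v w].
case: (enum _) Hm => [|a [|b [|c [|d l]]]] //= Hm /andP [Ha /andP [Hb _]] _.
have Ea : e v a by rewrite -[e v a]/(a \in [pred w | e v w]) -Hm mem_head.
have Eb : e v b by rewrite -[e v b]/(b \in [pred w | e v w]) -Hm !inE eqxx orbT.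
have Ec : e v c by rewrite -[e v c]/(c \in [pred w | e v w]) -Hm !inE eqxx !orbT.
exists a, b, c; do 3 (split => //).
split; first by move=> E; subst; rewrite !inE eqxx in Ha.
split; first by move=> E; subst; rewrite !inE eqxx orbT in Ha.
split; first by move=> E; subst; rewrite !inE eqxx in Hb.
  move=> u Hu; have : u \in [pred w | e v w] by [].
  by rewrite -Hm !inE => /orP [/eqP ->|/orP [/eqP ->|/eqP ->]]; tauto.
Qed.

Lemma insert_detour x s w u : path e x s -> last x s = x -> w \in x :: s -> e w u ->
  exists s', [/\ path e x s', last x s' = x, size s' = (size s + 2)%nat,
    (forall y, y \in x :: s -> y \in x :: s') & u \in x :: s'].
Proof.
move=> Hp Hl Hw Hwu.
have Huw : e u w by rewrite Hsym.
case/orP: Hw => [/eqP Ew|Hw].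
  subst w; exists [:: u, x & s]; split => //=.
  - by rewrite Hwu Huw Hp.
  - by rewrite addnC.
  - by move=> y; rewrite !inE => /orP [->|->]; rewrite ?orbT.
  - by rewrite !inE eqxx orbT.
case/splitPr: Hw Hp Hl => s1 s2 Hp Hl.
exists (s1 ++ [:: w, u, w & s2]); split.
- move: Hp; rewrite !cat_path /= => /andP [-> /andP [-> ->]].
  by rewrite Hwu Huw /=; move: (last x s1) => z.
- by move: Hl; rewrite !last_cat.
- by rewrite !size_cat /= addn2 !addnS.
- move=> y; rewrite !inE !mem_cat !inE.
  by case/orP => [->|/orP [->|/orP [->|->]]]; rewrite ?orbT.
- by rewrite !inE mem_cat !inE eqxx !orbT.
Qed.


Definition isvb (p : point T) (y : T) : bool :=
  (if Req_EM_T (pl p) 0 then pu p == y else false) ||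
  (if Req_EM_T (pl p) 1 then pv p == y else false).

Lemma isvbP p y : isvb p y <-> is_vertex p y.
Proof.
rewrite /isvb /is_vertex; split.
- case: Req_EM_T => H0; case: Req_EM_T => H1 //=.
  + by move/orP => [/eqP ->|/eqP ->]; [left|right].
  + by rewrite orbF => /eqP ->; left.
  + by move/eqP ->; right.
- case: p => a b l /= [[H E]|[H E]]; subst.
  + destruct (Req_EM_T 0 0) as [H0|H0]; [by rewrite eqxx | lra].
  + destruct (Req_EM_T 1 0) as [H0|H0]; first lra.
    destruct (Req_EM_T 1 1) as [H1|H1]; [by rewrite eqxx | lra].
Qed.

Definition visf (ws : seq (step T)) (y : T) : bool :=
  has (fun s => isvb (step_start s) y || isvb (step_end s) y) ws.

Lemma visfP ws y : visf ws y <->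
  exists s, List.In s ws /\ (is_vertex (step_start s) y \/ is_vertex (step_end s) y).
Proof.
elim: ws => [|s ws IH]; first by rewrite /visf /=; split => // [[s [[] _]]].
rewrite /visf /= -/(visf ws y); split.
- case/orP => [/orP [/isvbP H|/isvbP H]|/IH [s' [H1 H2]]].
  + by exists s; split; [left|left].
  + by exists s; split; [left|right].
  + by exists s'; split; [right|].
- move=> [s' [[<-|H1] H2]].
  + by case: H2 => /isvbP ->; rewrite ?orbT.
  + by apply/orP; right; apply/IH; exists s'.
Qed.

Lemma hard_rot ws X x0 : delta_tour e (1/2) ws -> is_walk e X X ws -> is_vertex X x0 -> Apt X ->
  exists v0 s, TSP_tour e v0 s /\ INR (size s) <= walk_len ws.
Proof.
move=> Hd Hw HX HXA.
pose vis := visf ws.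
have visP : forall y, vis y <-> exists s, List.In s ws /\
   (is_vertex (step_start s) y \/ is_vertex (step_end s) y) by move=> y; apply: visfP.
have Hvis : forall s x, List.In s ws -> is_vertex (step_start s) x \/ is_vertex (step_end s) x -> vis x.
  by move=> s x Hs Hx; apply/visP; exists s.
have [z0 [_ [_ [Hz0 _]]]] := nbrs x0.
have Hx0v : vis x0.
  have Hp : valid_point e (Pt x0 z0 0) by split => //=; lra.
  have [q [[s [Hs _]] _]] := proj2 Hd _ Hp.
  have [l1 [l2 Ews]] := in_split_cat Hs.
  have [s1 [ws' Ews']] : exists s1 ws', ws = s1 :: ws'.
    by rewrite Ews; case: l1 {Ews} => [|a l1] /=; [exists s, l2 | exists a, (l1 ++ s :: l2)].
  have Hs1 : List.In s1 ws by rewrite Ews'; left.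
  move: (Hw); rewrite Ews' => /= [[_ [H1 _]]].
  apply: (Hvis s1 x0 Hs1); left; exact: sp_vertex H1 HX.
have HXz : same_point X (Pt x0 z0 0) by right; right; exists x0; split => //; left.
have [sl [y' [z' [r' [P1 [P2 [P3 [P4 [P5 [P6 [P7 P8]]]]]]]]]]] :=
  extract Hsym Hw HXz Hz0 (conj (Rle_refl 0) Rlt_0_1) Hx0v Hvis.
have [Er' Ey'] := vertex_Pt P5 (sp_vertex P3 HX).
subst r' y'.
move: P8; rewrite /wt !if_same => P8.
have Hvs := P7.
have VB : forall u, ~~ vis u ->
   2 <= wsum (fun s => if (su s == u) || (sv s == u) then step_len s else 0) ws /\
   exists w, e u w /\ vis w.
  move=> u Hu.
  have [w1 [w2 [w3 [E1 [E2 [E3 [N12 [N13 [N23 Hnb]]]]]]]]] := nbrs u.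
  exact: (vert_bound Hsym Hirr Hd Hw HX HXA visP Hvs Hu E1 E2 E3 N12 N13 N23 Hnb).
have Hsum : forall l, uniq l -> (forall u, u \in l -> ~~ vis u) ->
   2 * INR (size l) <=
   wsum (fun s => if has (fun u => (su s == u) || (sv s == u)) l then step_len s else 0) ws.
  elim=> [|u l IH].
    move=> _ _; rewrite /= Rmult_0_r; apply: wsum_ge0 => s _; lra.
  move=> /andP [Hul Hl] Hun.
  rewrite (@wsum_ext _ _ (fun s => (if (su s == u) || (sv s == u) then step_len s else 0) +
       (if has (fun u => (su s == u) || (sv s == u)) l then step_len s else 0))); last first.
    move=> s Hs; rewrite [has _ (u :: l)]/=.
    case Hi : ((su s == u) || (sv s == u)); case Hh : (has _ l); rewrite /=; try ring.
    exfalso.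
    have [u' Hu' Hi'] := hasP Hh.
    have uu' : u != u' by apply: contraNneq Hul => ->.
    have Hvu : ~~ vis u by apply: Hun; rewrite mem_head.
    have Hvu' : ~~ vis u' by apply: Hun; rewrite in_cons Hu' orbT.
    have := Hvs s Hs.
    move: Hi Hi' => /orP [/eqP E|/eqP E] /orP [/eqP E'|/eqP E'].
    - by rewrite -E -E' eqxx in uu'.
    - by rewrite E E' (negbTE Hvu) (negbTE Hvu').
    - by rewrite E E' (negbTE Hvu) (negbTE Hvu').
    - by rewrite -E -E' eqxx in uu'.
  rewrite wsum_add; change (size (u :: l)) with (size l).+1; rewrite S_INR.
  have := IH Hl (fun u' Hu' => Hun u' (ltac:(by rewrite in_cons Hu' orbT))).
  have := proj1 (VB u (Hun u (mem_head _ _))).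
  lra.
pose U := [seq u <- enum T | ~~ vis u].
have HU := Hsum U (filter_uniq _ (enum_uniq _)) (fun u Hu => ltac:(by move: Hu; rewrite mem_filter => /andP [])).
have Hsplit : walk_len ws = wsum (wP vis) ws +
    wsum (fun s => if vis (su s) && vis (sv s) then 0 else step_len s) ws.
  rewrite walk_len_wsum -wsum_add; apply: wsum_ext => s _; rewrite /wP; case: ifP => _; ring.
have Hle : wsum (fun s => if has (fun u => (su s == u) || (sv s == u)) U then step_len s else 0) ws <=
    wsum (fun s => if vis (su s) && vis (sv s) then 0 else step_len s) ws.
  apply: wsum_le => s _; case: ifP => H; last by case: ifP => _; [lra | exact: step_len_ge0].
  have [u Hu Hi] := hasP H.
  move: Hu; rewrite mem_filter => /andP [Hu _].
  have Hn : (vis (su s) && vis (sv s)) = false.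
    by case/orP: Hi => /eqP ->; rewrite (negbTE Hu) ?andbF.
  rewrite Hn; exact: Rle_refl.
have Hdet : forall l, (forall u, u \in l -> ~~ vis u) ->
   exists s', [/\ path e x0 s', last x0 s' = x0, INR (size s') = INR (size sl) + 2 * INR (size l),
     (forall y, y \in x0 :: sl -> y \in x0 :: s') & (forall u, u \in l -> u \in x0 :: s')].
  elim=> [|u l IH] Hl.
    by exists sl; split => //; rewrite /= Rmult_0_r Rplus_0_r.
  have [s' [Q1 Q2 Q3 Q4 Q5]] := IH (fun u' Hu' => Hl u' (ltac:(by rewrite in_cons Hu' orbT))).
  have [w [Huw Hvw]] := proj2 (VB u (Hl u (mem_head _ _))).
  have Hw' : w \in x0 :: s'.
    apply: Q4; have [s [Hs Hx]] := proj1 (visP w) Hvw; exact: P6 Hs Hx.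
  have Hwu : e w u by rewrite Hsym.
  have [s'' [R1 R2 R3 R4 R5]] := insert_detour Q1 Q2 Hw' Hwu.
  exists s''; split => //.
  - have E2 : INR 2 = 2 by simpl; ring.
    rewrite R3 plus_INR Q3 E2; change (size (u :: l)) with (size l).+1; rewrite S_INR; lra.
  - by move=> y Hy; apply: R4; apply: Q4.
  - move=> y; rewrite in_cons => /orP [/eqP ->|Hy] //; exact: R4 (Q5 y Hy).
have [s' [Q1 Q2 Q3 Q4 Q5]] := Hdet U (fun u Hu => ltac:(by move: Hu; rewrite mem_filter => /andP [])).
exists x0, s'; split.
  split => //; split => // y.
  case Hy : (vis y).
    apply: Q4; have [s [Hs Hx]] := proj1 (visP y) Hy; exact: P6 Hs Hx.
  by apply: Q5; rewrite mem_filter Hy mem_enum.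
rewrite /TSP_len Q3 Hsplit; lra.
Qed.

End H.

Section E.
Variable T : finType.
Variable e : rel T.
Hypothesis Hsym : symmetric e.
Hypothesis Hirr : irreflexive e.

Fixpoint tsp_steps (x : T) (s : seq T) : seq (step T) :=
  match s with
  | [::] => [::]
  | y :: s' => St x y 0 1 :: tsp_steps y s'
  end.

Lemma tsp_walk x s (p q : point T) : path e x s -> is_vertex p x -> is_vertex q (last x s) ->
  is_walk e p q (tsp_steps x s).
Proof.
elim: s x p => [|y s IH] x p /=.
  by move=> _ Hp Hq; right; right; exists x.
move=> /andP [Hxy Hp'] Hp Hq; split.
  by rewrite /valid_step /=; split => //; split; first lra; split; first lra; lra.
split; first by right; right; exists x; split => //; left.
by apply: IH => //; right.
Qed.

Lemma tsp_len x s : walk_len (tsp_steps x s) = INR (size s).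
Proof.
elim: s x => [|y s IH] x //.
change (step_len (St x y 0 1) + walk_len (tsp_steps y s) = INR (size s).+1).
rewrite IH S_INR /step_len /= Rminus_0_l Rabs_Ropp Rabs_R1; ring.
Qed.

Lemma tsp_cover x s y : s <> [::] -> y \in x :: s ->
  exists st, List.In st (tsp_steps x s) /\ sa st = 0 /\ sb st = 1 /\ (su st = y \/ sv st = y).
Proof.
elim: s x => [|z s IH] x // _; rewrite in_cons => /orP [/eqP ->|Hy].
  by exists (St x z 0 1); split; [left | do ! split => //; left].
case: s IH Hy => [|z' s] IH Hy.
  move: Hy; rewrite mem_seq1 => /eqP ->.
  by exists (St x z 0 1); split; [left | do ! split => //; right].
have [st [H1 H2]] := IH z (ltac:(by [])) Hy.
by exists st; split => //; right.
Qed.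

Fixpoint pad (v w : T) (d : R) (N : nat) : seq (step T) :=
  match N with
  | O => [::]
  | S N' => St v w 0 d :: St v w d 0 :: pad v w d N'
  end.

Lemma pad_walk v w d N : e v w -> 0 < d <= 1 ->
  is_walk e (Pt v w 0) (Pt v w 0) (pad v w d N).
Proof.
move=> Hvw Hd; elim: N => [|N IH] /=; first exact: sp_refl.
split; first by rewrite /valid_step /=; split => //; split; first lra; split; first lra; lra.
split; first exact: sp_refl.
split; first by rewrite /valid_step /=; split => //; split; first lra; split; first lra; lra.
split; first exact: sp_refl.
exact: IH.
Qed.

Lemma pad_len v w d N : 0 <= d -> walk_len (pad v w d N) = 2 * INR N * d.
Proof.
move=> Hd; elim: N => [|N IH]; first by rewrite /= Rmult_0_r Rmult_0_l.
change (step_len (St v w 0 d) + (step_len (St v w d 0) + walk_len (pad v w d N)) = 2 * INR N.+1 * d).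
rewrite IH S_INR /step_len /= Rminus_0_l Rabs_Ropp Rminus_0_r Rabs_right; last lra.
ring.
Qed.


Lemma walk_len_cat (l1 l2 : seq (step T)) : walk_len (l1 ++ l2) = walk_len l1 + walk_len l2.
Proof. by rewrite !walk_len_wsum wsum_cat. Qed.

Lemma dist_edge a b l c : e a b -> 0 <= l <= 1 -> 0 <= c <= 1 ->
  dist_le e (Pt a b l) (Pt a b c) (Rabs (l - c)).
Proof.
move=> Hab Hl Hc.
case: (Req_EM_T l c) => E.
  subst; exists [::]; split; first exact: sp_refl.
  rewrite Rminus_diag Rabs_R0 /walk_len /=; lra.
exists [:: St a b l c]; split.
  split; first by rewrite /valid_step /=; do 3 (split => //).
  split; first exact: sp_refl.
  exact: sp_refl.
rewrite /walk_len /= /step_len /=; lra.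
Qed.

Hypothesis Hcub : cubic e.

Lemma easy v0 s K : TSP_tour e v0 s -> INR (TSP_len s) <= K ->
  exists ws, delta_tour e (1/2) ws /\ walk_len ws = K.
Proof.
move=> [Hp [Hl Hall]] HK; rewrite /TSP_len in HK.
have [w1 [_ [_ [He1 _]]]] := nbrs Hcub v0.
have Hs : s <> [::].
  move=> E; subst s; have := Hall w1; rewrite mem_seq1 => /eqP E.
  by subst; rewrite Hirr in He1.
have [N [d [Hd [HNd HN]]]] : exists N d, 0 < d <= 1 /\ 2 * INR N * d = K - INR (size s) /\ True.
  case: (Req_EM_T K (INR (size s))) => E.
    by exists 0%nat, (1/2); split; [lra | split => //; rewrite E /=; ring].
  have [N HN] := INR_unbounded (K - INR (size s)).
  have HN0 : 0 < INR N by lra.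
  exists N, ((K - INR (size s)) / (2 * INR N)); split; [split|split => //].
  - apply: Rdiv_lt_0_compat; lra.
  - rewrite /Rdiv; apply: (Rmult_le_reg_r (2 * INR N)); first lra.
    rewrite Rmult_assoc Rinv_l; lra.
  - field; lra.
pose ws := pad v0 w1 d N ++ tsp_steps v0 s.
have HP : valid_point e (Pt v0 w1 0) by split => //=; lra.
have Hw : is_walk e (Pt v0 w1 0) (Pt v0 w1 0) ws.
  apply: walk_cat (pad_walk N He1 Hd) _.
  by apply: tsp_walk => //; [left | rewrite Hl; left].
exists ws; split; last by rewrite walk_len_cat pad_len ?tsp_len; lra.
split; first by exists (Pt v0 w1 0).
have Hcov : forall y q, is_vertex q y -> tour_covers ws q.
  move=> y q Hq.
  have [st [Hst [Ha [Hb Hy]]]] := tsp_cover Hs (Hall y).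
  exists st; split; first by apply/In_cat; right.
  have Hmin : Rmin (sa st) (sb st) = 0 by rewrite Ha Hb Rmin_left; lra.
  have Hmax : Rmax (sa st) (sb st) = 1 by rewrite Ha Hb Rmax_right; lra.
  case: Hy => Hy.
  - exists 0; rewrite Hmin Hmax; split; first lra.
    by right; right; exists y; split => //; left.
  - exists 1; rewrite Hmin Hmax; split; first lra.
    by right; right; exists y; split => //; right.
case=> a b l [Hab Hl']; rewrite /= in Hab Hl'.
case: (Rle_lt_dec l (1/2)) => Hl2.
- exists (Pt a b 0); split; first by apply: (Hcov a); left.
  have [ws0 [H1 H2]] := dist_edge Hab Hl' (conj (Rle_refl 0) Rle_0_1).
  exists ws0; split => //; move: H2; rewrite Rminus_0_r Rabs_right; lra.
- exists (Pt a b 1); split; first by apply: (Hcov b); right.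
  have [ws0 [H1 H2]] := dist_edge Hab Hl' (conj Rle_0_1 (Rle_refl 1)).
  exists ws0; split => //; move: H2; rewrite Rabs_left1; lra.
Qed.

End E.

Section F.
Variable T : finType.
Variable e : rel T.
Hypothesis Hsym : symmetric e.
Hypothesis Hirr : irreflexive e.
Hypothesis Hcub : cubic e.

Lemma has_ex (f : step T -> bool) l : has f l -> exists s, List.In s l /\ f s.
Proof.
elim: l => [|s l IH] //= /orP [H|H]; first by exists s; split => //; left.
by have [s' [H1 H2]] := IH H; exists s'; split => //; right.
Qed.

Lemma hasN_all (f : step T -> bool) l : ~~ has f l -> forall s, List.In s l -> ~~ f s.
Proof.
elim: l => [|s l IH] //=; rewrite negb_or => /andP [H1 H2] s' [<-|H] //.
exact: IH.
Qed.

Lemma nv_sp (p r : point T) a b : same_point p r -> (forall x, ~ is_vertex p x) ->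
  (forall x, ~ is_vertex r x) /\ (on_pt p a b -> on_pt r a b).
Proof.
move=> H Hp; split; first by move=> x Hx; apply: (Hp x); apply: sp_vertex (sp_sym H) Hx.
case: H => [E|[E|[x [Hx _]]]]; last by case: (Hp x).
- by move: E; case: p {Hp} r => a' b' l' [c d m] /= [-> [-> _]].
- move: E; case: p {Hp} r => a' b' l' [c d m] /= [-> [-> _]].
  by rewrite /on_pt /= => /orP [/andP [-> ->]|/andP [-> ->]]; rewrite ?orbT.
Qed.

Lemma walk_end_nv (p q : point T) s ws : is_walk e p q (s :: ws) ->
  (forall s', List.In s' (s :: ws) -> forall x, ~ is_vertex (step_end s') x) ->
  forall x, ~ is_vertex q x.
Proof.
elim: ws p s => [|s' ws IH] p s /= [_ [_ H]] Hn x Hx.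
  by apply: (Hn s (or_introl erefl) x); apply: sp_vertex (sp_sym H) Hx.
apply: (IH _ _ H _ x Hx).
by move=> s'' Hs''; apply: Hn; right.
Qed.

Lemma same_edge (p q : point T) ws a b : is_walk e p q ws -> (forall x, ~ is_vertex p x) ->
  on_pt p a b -> (forall s, List.In s ws -> forall x, ~ is_vertex (step_end s) x) ->
  forall s, List.In s ws -> on_st s a b.
Proof.
elim: ws p => [|s ws IH] p //= [_ [H1 H2]] Hp Hon Hn s' [<-|Hs'].
  by have [_ H] := nv_sp a b H1 Hp; apply: H.
apply: (IH _ H2) => //.
- by move=> x; apply: Hn; left.
- have [_ H] := nv_sp a b H1 Hp; have := H Hon.
  by rewrite /on_st /on_pt.
- by move=> s'' Hs''; apply: Hn; right.
Qed.

Lemma hard ws K : delta_tour e (1/2) ws -> walk_len ws = K ->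
  exists v0 s, TSP_tour e v0 s /\ INR (TSP_len s) <= K.
Proof.
move=> Hd HK; have [[p0 [Hp0 Hw]] Hc] := Hd.
case Hex : (has (fun s => [exists x, isvb (step_end s) x]) ws).
- have [s [Hs /existsP [x /isvbP Hx]]] := has_ex Hex.
  have [pre [post Ews]] := in_split_cat Hs.
  have Ews' : ws = (pre ++ [:: s]) ++ post by rewrite Ews -catA.
  move: (Hw); rewrite Ews' => Hw'.
  have [m [Hm1 Hm2]] := walk_split Hw'.
  have [m' [_ Hm3]] := walk_split Hm1.
  have Hme : same_point (step_end s) m by case: Hm3 => _ [_ H].
  have Hw2 : is_walk e (step_end s) (step_end s) (post ++ (pre ++ [:: s])).
    apply: walk_cat (walk_sp_l Hme Hm2) (walk_sp_r Hm1 (sp_sym Hme)).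
  have HIn : forall t, List.In t (post ++ (pre ++ [:: s])) <-> List.In t ws.
    move=> t; rewrite Ews' !In_cat; tauto.
  have [Ve [_ [Hsb _]]] := walk_valid Hw Hs.
  have Hvalid : valid_point e (step_end s) by split.
  have Hd' : delta_tour e (1/2) (post ++ (pre ++ [:: s])).
    split; first by exists (step_end s).
    move=> p Hp; have [q [[t [Ht Hq]] Hdist]] := Hc p Hp.
    by exists q; split => //; exists t; split => //; apply/HIn.
  have [v0 [s' [HT Hle]]] := hard_rot Hsym Hirr Hcub Hd' Hw2 Hx (valid_Apt Hirr Hvalid).
  exists v0, s'; split => //.
  move: Hle; rewrite /TSP_len -HK Ews' !walk_len_cat; lra.
- exfalso.
  have Hn : forall s, List.In s ws -> forall x, ~ is_vertex (step_end s) x.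
    move=> s Hs x Hx; have := hasN_all (negbT Hex) Hs; rewrite negb_exists => /forallP /(_ x).
    by move/isvbP: Hx => ->.
  have [q [[s0 [Hs0 _]] _]] := Hc p0 Hp0.
  have Hp0n : forall x, ~ is_vertex p0 x.
    case: ws Hw Hs0 Hn {Hex Hc Hd HK} => [|s1 ws'] // Hw _ Hn.
    exact: walk_end_nv Hw Hn.
  case: p0 Hp0 Hw Hp0n => a b l Hp0 Hw Hp0n.
  have Hab : e a b by case: Hp0.
  have Hon0 : on_pt (Pt a b l) a b by rewrite /on_pt /= !eqxx.
  have Hon := same_edge Hw Hp0n Hon0 Hn.
  have [w1 [w2 [w3 [E1 [E2 [E3 [N12 [N13 [N23 Hnb]]]]]]]]] := nbrs Hcub a.
  have [c [Hac Hcb]] : exists c, e a c /\ c <> b.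
    case: (w1 =P b) => H; last by exists w1.
    by exists w2; split => // E; apply: N12; rewrite H E.
  have Hca : c <> a by move=> E; subst; rewrite Hirr in Hac.
  have Hp : valid_point e (Pt c a 0) by split; [rewrite /= Hsym | rewrite /=; lra].
  have [s [tau [Hs [_ H]]]] := cover_near Hirr (@pos_inv T c) (@pos_step T c) Hd Hp.
  move: (Hon s Hs) H; rewrite /pos /on_st /on_pt /=.
  have Hca' : (a == c) = false by apply/eqP => E; apply: Hca.
  have Hcb' : (b == c) = false by apply/eqP => E; apply: Hcb.
  case/orP => [/andP [/eqP -> /eqP ->]|/andP [/eqP -> /eqP ->]]; rewrite ?Hca' ?Hcb' ?eqxx /=;
    split_Rabs; lra.
Qed.

End F.


Local Close Scope R_scope.
Unset Implicit Arguments.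

Theorem mainTheorem15 (T : finType) (e : rel T)
  (Hsimple : simple_graph e) (Hcubic : cubic e) (Hbip : bipartite e)
  (Hconn : connected_graph e) (K : R) :
  (exists (v0 : T) (s : seq T), TSP_tour e v0 s /\ (INR (TSP_len s) <= K)%R) <->
  (exists ws : seq (step T), delta_tour e (1/2)%R ws /\ walk_len ws = K).
Proof.
case: Hsimple => Hsym Hirr.
split.
- by move=> [v0 [s [HT HK]]]; exact: (easy Hirr Hcubic HT HK).
- by move=> [ws [Hd HK]]; exact: (hard Hsym Hirr Hcubic Hd HK).
Qed.
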